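(* Let $\Lambda$ be any of the logics $K$, $T$, $K4$, $K5$, $S4$, $S5$. A formula $\varphi$ of the language $\mathcal{L}^{+}$ is true at every world of every $\Lambda$-model if and only if $\varphi$ is derivable in the proof system $\Lambda+\mathrm{Ax}$ described below.
   Context: Fix a countable non-empty set $\mathit{At}$ of atoms. A literal is an atom or its negation; a clause is a finite set $D$ of literals read as $\bigvee D$ ($\bigvee\varnothing:=\bot$); it is tautological if it contains $p$ and $\lnot p$ for some $p$. For propositional $\pi$, $\mathcal{C}(\pi)$ is the (finite) set of non-tautological clauses $D$ with $\models\pi\to\bigvee D$ and no $D'\subsetneq D$ with $\models\pi\to\bigvee D'$. Language $\mathcal{L}^{+}$: formulas built from $\top$, atoms $p$, $\lnot$, $\land$, $\Box$, operators $[\ddagger\pi]$ for each propositional formula $\pi$, and operators $[D_1,D_2]_i$ for $i\in\{0,1,2\}$ and any finite non-tautological clauses $D_1,D_2$; other connectives defined as usual. Models: $\mathcal{M}=\langle W,R,V\rangle$, $W\neq\varnothing$, $R\subseteq W\times W$, $V:\mathit{At}\to\mathcal{P}(W)$, standard semantics for atoms, Booleans and $\Box$. For finite non-tautological clauses $D_1,D_2$, the model $\mathcal{M}^{(D_1,D_2)}=\langle W',R',V'\rangle$ has $W'=W\times\{0,1,2\}$, $(w,i)R'(v,j)$ iff $wRv$, $(w,0)\in V'(p)$ iff $w\in V(p)$, and for $i\in\{1,2\}$: $(w,i)\in V'(p)$ iff $\lnot p\in D_i$, or $\{p,\lnot p\}\cap D_i=\varnothing$ and $w\in V(p)$. Semantics: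 $\mathcal{M},w\models[D_1,D_2]_i\varphi$ iff $\mathcal{M}^{(D_1,D_2)},(w,i)\models\varphi$; $\mathcal{M},w\models[\ddagger\pi]\varphi$ iff for all $D_1\in\mathcal{C}(\pi)$ and $D_2\in\mathcal{C}(\lnot\pi)$, $\mathcal{M}^{(D_1,D_2)},(w,0)\models\varphi$. $\Lambda$-models: $K$: all models; $T$: reflexive $R$; $K4$: transitive; $K5$: euclidean; $S4$: reflexive and transitive; $S5$: equivalence relation. The proof system $\Lambda$ (over $\mathcal{L}^{+}$) consists of all instances in $\mathcal{L}^{+}$ of propositional tautologies, the distribution axiom $\Box(\varphi\to\psi)\to(\Box\varphi\to\Box\psi)$, modus ponens and necessitation (from $\varphi$ infer $\Box\varphi$), together with, as appropriate, $\Box\varphi\to\varphi$ (for $T,S4,S5$), $\Box\varphi\to\Box\Box\varphi$ (for $K4,S4,S5$) and $\lnot\Box\varphi\to\Box\lnot\Box\varphi$ (for $K5,S5$). $\mathrm{Ax}$ consists of the following, for all propositional $\pi$, all finite non-tautological clauses $D_1,D_2$, all atoms $p$, all formulas $\varphi,\psi$, and with $[\,\cdot\,]$ ranging over $[D_1,D_2]_0,[D_1,D_2]_1,[D_1,D_2]_2$: (1) $[\ddagger\pi]\varphi\leftrightarrow\bigwedge_{D_1\in\mathcal{C}(\pi)}\bigwedge_{D_2\in\mathcal{C}(\lnot\pi)}[D_1,D_2]_0\varphi$; (2) $[D_1,D_2]_0p\leftrightarrow p$; (3) for $j\in\{1,2\}$: $[D_1,D_2]_jp\leftrightarrow p$ if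 $\{p,\lnot p\}\cap D_j=\varnothing$; $[D_1,D_2]_jp\leftrightarrow\top$ if $\lnot p\in D_j$; $[D_1,D_2]_jp\leftrightarrow\bot$ if $p\in D_j$; (4) $[\,\cdot\,]\lnot\varphi\leftrightarrow\lnot[\,\cdot\,]\varphi$; (5) $[\,\cdot\,](\varphi\land\psi)\leftrightarrow([\,\cdot\,]\varphi\land[\,\cdot\,]\psi)$; (6) $[\,\cdot\,]\Box\varphi\leftrightarrow\Box([D_1,D_2]_0\varphi\land[D_1,D_2]_1\varphi\land[D_1,D_2]_2\varphi)$; (7) $[\,\cdot\,](\varphi\to\psi)\to([\,\cdot\,]\varphi\to[\,\cdot\,]\psi)$; (8) the rule: from $\vdash\varphi$ infer $\vdash[\,\cdot\,]\varphi$. *)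

(* Defs.v *)
From mathcomp Require Import all_boot.
From mathcomp Require Import finmap.
From Stdlib Require List.

Set Implicit Arguments.
Unset Strict Implicit.
Unset Printing Implicit Defensive.

Local Open Scope fset_scope.

Section Syntax.
Variable At : countType.

Inductive pform (A : Type) : Type :=
| PTop : pform A
| PAtom : A -> pform A
| PNeg : pform A -> pform A
| PAnd : pform A -> pform A -> pform A.

Fixpoint peval (A : Type) (v : A -> bool) (p : pform A) : bool :=
  match p with
  | PTop => true
  | PAtom a => v a
  | PNeg q => ~~ peval v q
  | PAnd q r => peval v q && peval v r
  end.

(** Literals: (true, p) is the atom p, (false, p) is its negation ~p. *)
Definition lit : Type := (bool * At)%type.
Definition lneg (l : lit) : lit := (~~ l.1, l.2).
Definition litval (v : At -> bool) (l : lit) : bool :=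
  if l.1 then v l.2 else ~~ v l.2.

Definition clause : Type := {fset lit}.
Definition tautological (D : clause) : bool :=
  has (fun l => lneg l \in D) (enum_fset D).

Record ntclause : Type := NTC { ntc :> clause ; ntc_ok : ~~ tautological ntc }.

Definition entails (pi : pform At) (D : clause) : Prop :=
  forall v : At -> bool, peval v pi -> exists2 l, l \in D & litval v l.

Definition inC (pi : pform At) (D : ntclause) : Prop :=
  entails pi D /\ (forall D' : clause, D' `<` (D : clause) -> ~ entails pi D').

Inductive idx : Type := I0 | I1 | I2.

Inductive form : Type :=
| FTop : form
| FAtom : At -> form
| FNeg : form -> form
| FAnd : form -> form -> form
| FBox : form -> form
| FDyn : pform At -> form -> form
| FUpd : ntclause -> ntclause -> idx -> form -> form.

Definition FBot : form := FNeg FTop.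
Definition FImp (a b : form) : form := FNeg (FAnd a (FNeg b)).
Definition FIff (a b : form) : form := FAnd (FImp a b) (FImp b a).
Definition bigAnd (s : seq form) : form := foldr FAnd FTop s.

Fixpoint inst (sigma : nat -> form) (t : pform nat) : form :=
  match t with
  | PTop => FTop
  | PAtom n => sigma n
  | PNeg q => FNeg (inst sigma q)
  | PAnd q r => FAnd (inst sigma q) (inst sigma r)
  end.

Definition ptautology (t : pform nat) : Prop := forall v : nat -> bool, peval v t.

End Syntax.

Arguments PTop {A}.
Arguments FTop {At}.
Arguments FBot {At}.

Unset Implicit Arguments.

Record model (At : Type) : Type := Model {
  mworld : Type;
  mrel : mworld -> mworld -> Prop;
  mval : At -> mworld -> Prop }.
Arguments mval {At} m _ _.
Arguments mrel {At} m _ _.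
Arguments mworld {At} m.
Arguments Model {At} mworld mrel mval.

Definition upd_val (At : countType) (M : model At) (D1 D2 : ntclause At)
  (p : At) (x : mworld M * idx) : Prop :=
  match x.2 with
  | I0 => mval M p x.1
  | I1 => ((false, p) \in (D1 : clause At)) \/
          (((true, p) \notin (D1 : clause At)) /\ ((false, p) \notin (D1 : clause At)) /\ mval M p x.1)
  | I2 => ((false, p) \in (D2 : clause At)) \/
          (((true, p) \notin (D2 : clause At)) /\ ((false, p) \notin (D2 : clause At)) /\ mval M p x.1)
  end.

Definition upd_model (At : countType) (M : model At) (D1 D2 : ntclause At) : model At :=
  Model (mworld M * idx)%type (fun x y => mrel M x.1 y.1) (upd_val At M D1 D2).

Fixpoint sat (At : countType) (M : model At) (w : mworld M) (phi : form At) {struct phi} : Prop :=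
  match phi with
  | FTop => True
  | FAtom p => mval M p w
  | FNeg a => ~ sat At M w a
  | FAnd a b => sat At M w a /\ sat At M w b
  | FBox a => forall v, mrel M w v -> sat At M v a
  | FDyn pi a => forall D1 D2 : ntclause At, inC pi D1 -> inC (PNeg pi) D2 ->
                   sat At (upd_model At M D1 D2) (w, I0) a
  | FUpd D1 D2 i a => sat At (upd_model At M D1 D2) (w, i) a
  end.

Inductive logic : Type := LK | LT | LK4 | LK5 | LS4 | LS5.

Definition reflexive_rel (W : Type) (R : W -> W -> Prop) := forall w, R w w.
Definition transitive_rel (W : Type) (R : W -> W -> Prop) :=
  forall u v w, R u v -> R v w -> R u w.
Definition euclidean_rel (W : Type) (R : W -> W -> Prop) :=
  forall u v w, R u v -> R u w -> R v w.
Definition symmetric_rel (W : Type) (R : W -> W -> Prop) := forall u v, R u v -> R v u.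

Definition frame_cond (L : logic) (W : Type) (R : W -> W -> Prop) : Prop :=
  match L with
  | LK => True
  | LT => reflexive_rel W R
  | LK4 => transitive_rel W R
  | LK5 => euclidean_rel W R
  | LS4 => reflexive_rel W R /\ transitive_rel W R
  | LS5 => reflexive_rel W R /\ symmetric_rel W R /\ transitive_rel W R
  end.

Definition has_T (L : logic) : bool := match L with LT | LS4 | LS5 => true | _ => false end.
Definition has_4 (L : logic) : bool := match L with LK4 | LS4 | LS5 => true | _ => false end.
Definition has_5 (L : logic) : bool := match L with LK5 | LS5 => true | _ => false end.

Definition valid_in (At : countType) (L : logic) (phi : form At) : Prop :=
  forall M : model At, inhabited (mworld M) -> frame_cond L (mworld M) (mrel M) ->
    forall w : mworld M, sat At M w phi.

Definition enumerates (At : countType) (P : ntclause At -> Prop) (s : seq (ntclause At)) : Prop :=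
  List.NoDup s /\ forall D, List.In D s <-> P D.

Inductive derivable (At : countType) (L : logic) : form At -> Prop :=
| d_taut (t : pform nat) (sigma : nat -> form At) :
    ptautology t -> derivable At L (inst sigma t)
| d_K (a b : form At) :
    derivable At L (FImp (FBox (FImp a b)) (FImp (FBox a) (FBox b)))
| d_MP (a b : form At) :
    derivable At L (FImp a b) -> derivable At L a -> derivable At L b
| d_Nec (a : form At) : derivable At L a -> derivable At L (FBox a)
| d_T (a : form At) : has_T L -> derivable At L (FImp (FBox a) a)
| d_4 (a : form At) : has_4 L -> derivable At L (FImp (FBox a) (FBox (FBox a)))
| d_5 (a : form At) : has_5 L ->
    derivable At L (FImp (FNeg (FBox a)) (FBox (FNeg (FBox a))))
| d_ax1 (pi : pform At) (a : form At) (s1 s2 : seq (ntclause At)) :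
    enumerates At (inC pi) s1 -> enumerates At (inC (PNeg pi)) s2 ->
    derivable At L (FIff (FDyn pi a)
      (bigAnd [seq bigAnd [seq FUpd D1 D2 I0 a | D2 <- s2] | D1 <- s1]))
| d_ax2 (D1 D2 : ntclause At) (p : At) :
    derivable At L (FIff (FUpd D1 D2 I0 (FAtom p)) (FAtom p))
| d_ax3_1a (D1 D2 : ntclause At) (p : At) :
    (true, p) \notin (D1 : clause At) -> (false, p) \notin (D1 : clause At) ->
    derivable At L (FIff (FUpd D1 D2 I1 (FAtom p)) (FAtom p))
| d_ax3_1b (D1 D2 : ntclause At) (p : At) :
    (false, p) \in (D1 : clause At) ->
    derivable At L (FIff (FUpd D1 D2 I1 (FAtom p)) FTop)
| d_ax3_1c (D1 D2 : ntclause At) (p : At) :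
    (true, p) \in (D1 : clause At) ->
    derivable At L (FIff (FUpd D1 D2 I1 (FAtom p)) FBot)
| d_ax3_2a (D1 D2 : ntclause At) (p : At) :
    (true, p) \notin (D2 : clause At) -> (false, p) \notin (D2 : clause At) ->
    derivable At L (FIff (FUpd D1 D2 I2 (FAtom p)) (FAtom p))
| d_ax3_2b (D1 D2 : ntclause At) (p : At) :
    (false, p) \in (D2 : clause At) ->
    derivable At L (FIff (FUpd D1 D2 I2 (FAtom p)) FTop)
| d_ax3_2c (D1 D2 : ntclause At) (p : At) :
    (true, p) \in (D2 : clause At) ->
    derivable At L (FIff (FUpd D1 D2 I2 (FAtom p)) FBot)
| d_ax4 (D1 D2 : ntclause At) (i : idx) (a : form At) :
    derivable At L (FIff (FUpd D1 D2 i (FNeg a)) (FNeg (FUpd D1 D2 i a)))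
| d_ax5 (D1 D2 : ntclause At) (i : idx) (a b : form At) :
    derivable At L (FIff (FUpd D1 D2 i (FAnd a b))
                      (FAnd (FUpd D1 D2 i a) (FUpd D1 D2 i b)))
| d_ax6 (D1 D2 : ntclause At) (i : idx) (a : form At) :
    derivable At L (FIff (FUpd D1 D2 i (FBox a))
      (FBox (FAnd (FUpd D1 D2 I0 a) (FAnd (FUpd D1 D2 I1 a) (FUpd D1 D2 I2 a)))))
| d_ax7 (D1 D2 : ntclause At) (i : idx) (a b : form At) :
    derivable At L (FImp (FUpd D1 D2 i (FImp a b))
                      (FImp (FUpd D1 D2 i a) (FUpd D1 D2 i b)))
| d_nec_upd (D1 D2 : ntclause At) (i : idx) (a : form At) :
    derivable At L a -> derivable At L (FUpd D1 D2 i a).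

(* Main.v *)
Require Import Defs.
From mathcomp Require Import all_boot.
From mathcomp Require Import finmap.
From Stdlib Require Import Classical ClassicalEpsilon.
From Stdlib Require List.
Set Implicit Arguments.
Unset Strict Implicit.

Definition V (n : nat) : pform nat := PAtom n.
Definition pImp (x y : pform nat) : pform nat := PNeg (PAnd x (PNeg y)).
Definition pIff (x y : pform nat) : pform nat := PAnd (pImp x y) (pImp y x).
Definition sg {At : countType} (l : seq (form At)) (n : nat) : form At := nth FTop l n.

Lemma PC {At : countType} {L : logic} (hs : seq (pform nat)) (c : pform nat) (l : seq (form At)) :
  ptautology (foldr pImp c hs) ->
  (forall h, List.In h hs -> derivable At L (inst (sg l) h)) -> derivable At L (inst (sg l) c).
Proof.
move=> Ht; have : derivable At L (inst (sg l) (foldr pImp c hs)) by apply: d_taut.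
elim: hs {Ht} => [//|h hs IH] Hd Hh.
change (derivable At L (FImp (inst (sg l) h) (inst (sg l) (foldr pImp c hs)))) in Hd.
apply: IH => [|h' Hin]; last by apply: Hh; right.
apply: (d_MP _ _ _ _ Hd). apply: Hh. by left.
Qed.

Ltac tauto_b := let v := fresh "v" in intro v; simpl; case: (v 0); case: (v 1); case: (v 2); case: (v 3); case: (v 4); case: (v 5).
Ltac hyps := let h := fresh in let Hin := fresh in intros h Hin; repeat (destruct Hin as [<-|Hin]; [assumption|]); destruct Hin.
Ltac pc hs c l := apply: (@PC _ _ hs c l); [by tauto_b | hyps].

Section T.
Context {At : countType} {L : logic}.
Local Notation "|- a" := (derivable At L a) (at level 70).
Implicit Types a b c d : form At.

Lemma mp a b : |- FImp a b -> |- a -> |- b.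
Proof. exact: d_MP. Qed.

Lemma imp_trans a b c : |- FImp a b -> |- FImp b c -> |- FImp a c.
Proof. move=> h1 h2; pc [:: pImp (V 0) (V 1); pImp (V 1) (V 2)] (pImp (V 0) (V 2)) [:: a; b; c]. Qed.

Lemma iffI a b : |- FImp a b -> |- FImp b a -> |- FIff a b.
Proof. move=> h1 h2; pc [:: pImp (V 0) (V 1); pImp (V 1) (V 0)] (pIff (V 0) (V 1)) [:: a; b]. Qed.

Lemma iff_l a b : |- FIff a b -> |- FImp a b.
Proof. move=> h1; pc [:: pIff (V 0) (V 1)] (pImp (V 0) (V 1)) [:: a; b]. Qed.

Lemma iff_r a b : |- FIff a b -> |- FImp b a.
Proof. move=> h1; pc [:: pIff (V 0) (V 1)] (pImp (V 1) (V 0)) [:: a; b]. Qed.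

Lemma iff_refl a : |- FIff a a.
Proof. pc (@nil (pform nat)) (pIff (V 0) (V 0)) [:: a]. Qed.

Lemma iff_sym a b : |- FIff a b -> |- FIff b a.
Proof. move=> h1; pc [:: pIff (V 0) (V 1)] (pIff (V 1) (V 0)) [:: a; b]. Qed.

Lemma iff_trans a b c : |- FIff a b -> |- FIff b c -> |- FIff a c.
Proof. move=> h1 h2; pc [:: pIff (V 0) (V 1); pIff (V 1) (V 2)] (pIff (V 0) (V 2)) [:: a; b; c]. Qed.

Lemma iff_mp a b : |- FIff a b -> |- a -> |- b.
Proof. move=> h1 h2; pc [:: pIff (V 0) (V 1); V 0] (V 1) [:: a; b]. Qed.

Lemma iff_mpr a b : |- FIff a b -> |- b -> |- a.
Proof. move=> h1 h2; pc [:: pIff (V 0) (V 1); V 1] (V 0) [:: a; b]. Qed.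

Lemma neg_iff a b : |- FIff a b -> |- FIff (FNeg a) (FNeg b).
Proof. move=> h1; pc [:: pIff (V 0) (V 1)] (pIff (PNeg (V 0)) (PNeg (V 1))) [:: a; b]. Qed.

Lemma and_iff a b c d : |- FIff a b -> |- FIff c d -> |- FIff (FAnd a c) (FAnd b d).
Proof. move=> h1 h2; pc [:: pIff (V 0) (V 1); pIff (V 2) (V 3)] (pIff (PAnd (V 0) (V 2)) (PAnd (V 1) (V 3))) [:: a; b; c; d]. Qed.

Lemma top : |- (@FTop At).
Proof. pc (@nil (pform nat)) (@PTop nat) [:: (@FTop At)]. Qed.

Lemma iff_of a b : |- a -> |- b -> |- FIff a b.
Proof. move=> h1 h2; pc [:: V 0; V 1] (pIff (V 0) (V 1)) [:: a; b]. Qed.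

Lemma and_intro a b : |- a -> |- b -> |- FAnd a b.
Proof. move=> h1 h2; pc [:: V 0; V 1] (PAnd (V 0) (V 1)) [:: a; b]. Qed.

Lemma and_l a b : |- FAnd a b -> |- a.
Proof. move=> h1; pc [:: PAnd (V 0) (V 1)] (V 0) [:: a; b]. Qed.

Lemma and_r a b : |- FAnd a b -> |- b.
Proof. move=> h1; pc [:: PAnd (V 0) (V 1)] (V 1) [:: a; b]. Qed.

Lemma imp_and a b c : |- FImp a b -> |- FImp a c -> |- FImp a (FAnd b c).
Proof. move=> h1 h2; pc [:: pImp (V 0) (V 1); pImp (V 0) (V 2)] (pImp (V 0) (PAnd (V 1) (V 2))) [:: a; b; c]. Qed.

Lemma and_imp a b c d : |- FImp a b -> |- FImp c d -> |- FImp (FAnd a c) (FAnd b d).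
Proof. move=> h1 h2; pc [:: pImp (V 0) (V 1); pImp (V 2) (V 3)] (pImp (PAnd (V 0) (V 2)) (PAnd (V 1) (V 3))) [:: a; b; c; d]. Qed.

Lemma box_imp a b : |- FImp a b -> |- FImp (FBox a) (FBox b).
Proof. move=> h; apply: mp (d_K _ _ a b) _; exact: d_Nec. Qed.

Lemma box_iff a b : |- FIff a b -> |- FIff (FBox a) (FBox b).
Proof. by move=> h; apply: iffI; apply: box_imp; [apply: iff_l h | apply: iff_r h]. Qed.

Lemma upd_imp D1 D2 i a b : |- FImp a b -> |- FImp (FUpd D1 D2 i a) (FUpd D1 D2 i b).
Proof. move=> h; apply: mp (d_ax7 _ _ D1 D2 i a b) _; exact: d_nec_upd. Qed.

Lemma upd_iff D1 D2 i a b : |- FIff a b -> |- FIff (FUpd D1 D2 i a) (FUpd D1 D2 i b).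
Proof. by move=> h; apply: iffI; apply: upd_imp; [apply: iff_l h | apply: iff_r h]. Qed.

End T.

Definition bdec (P : Prop) : bool := if excluded_middle_informative P then true else false.
Lemma bdecP (P : Prop) : bdec P <-> P.
Proof. by rewrite /bdec; case: excluded_middle_informative. Qed.

Lemma seq_In_map (A B : Type) (f : A -> B) (l : seq A) y :
  List.In y (map f l) <-> exists x, List.In x l /\ y = f x.
Proof.
elim: l => [|x l IH] /=; first by split=> [[]|[x []]].
split=> [[<-|/IH [x' [H1 H2]]]|[x' [[<-|H1] H2]]].
- by exists x; split=> //; left.
- by exists x'; split=> //; right.
- by left.
- by right; apply/IH; exists x'.
Qed.

Section S.
Context {At : countType}.
Implicit Types a b : form At.

Lemma sat_inst (M : model At) w sigma t :
  sat At M w (inst sigma t) <-> peval (fun n => bdec (sat At M w (sigma n))) t.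
Proof.
elim: t => [|n|t IH|t1 IH1 t2 IH2] /=.
- by [].
- by rewrite bdecP.
- rewrite IH; set x := peval _ t; case: x => /=; split=> //; by move=> H; case: H.
- rewrite IH1 IH2; set x := peval _ t1; set y := peval _ t2; by case: x; case: y; intuition.
Qed.

Lemma sat_imp (M : model At) w a b : sat At M w (FImp a b) <-> (sat At M w a -> sat At M w b).
Proof. rewrite /=; split=> [H Ha|H [Ha Hb]]; last by apply: Hb; apply: H. by apply: NNPP => Hb; apply: H. Qed.

Lemma sat_iff (M : model At) w a b : sat At M w (FIff a b) <-> (sat At M w a <-> sat At M w b).
Proof. change (sat At M w (FImp a b) /\ sat At M w (FImp b a) <-> (sat At M w a <-> sat At M w b)). by rewrite !sat_imp. Qed.

Lemma sat_bigAnd (M : model At) w l : sat At M w (bigAnd l) <-> forall x, List.In x l -> sat At M w x.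
Proof.
elim: l => [|x l IH] /=; first by split.
rewrite IH; split=> [[H1 H2] y [<-|Hy]|H]; [by []|by apply: H2|].
by split=> [|y Hy]; apply: H; [left|right].
Qed.

Lemma ntc_tf (D : ntclause At) p : (true, p) \in (D : clause At) -> (false, p) \in (D : clause At) -> False.
Proof.
move=> H1 H2; move: (ntc_ok D); rewrite /tautological => /hasP; apply.
by exists (true, p).
Qed.

Lemma frame_upd L (M : model At) D1 D2 :
  frame_cond L (mworld M) (mrel M) -> frame_cond L (mworld (upd_model At M D1 D2)) (mrel (upd_model At M D1 D2)).
Proof.
case: L => /=; rewrite /reflexive_rel /transitive_rel /euclidean_rel /symmetric_rel.
- by [].
- by move=> H x; apply: H.
- by move=> H x y z; apply: H.
- by move=> H x y z; apply: H.
- by move=> [H1 H2]; split=> [x|x y z]; [apply: H1|apply: H2].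
- by move=> [H1 [H2 H3]]; split=> [x|]; [apply: H1|split=> [x y|x y z]; [apply: H2|apply: H3]].
Qed.

Lemma sound L a : derivable At L a ->
  forall M : model At, frame_cond L (mworld M) (mrel M) -> forall w, sat At M w a.
Proof.
elim=> {a}.
- move=> t sigma Ht M _ w; rewrite sat_inst; exact: Ht.
- move=> a b M _ w; rewrite !sat_imp /= => H1 H2 v Hv; apply: NNPP => Hb; apply: (H1 v Hv); split=> //; exact: H2.
- move=> a b _ IH1 _ IH2 M HM w; move: (IH1 M HM w); rewrite sat_imp; apply; exact: IH2.
- move=> a _ IH M HM w v _; exact: IH.
- move=> a; case: L => // _ M HM w; rewrite sat_imp /= => H; apply: H;
  [exact: HM | exact: HM.1 | exact: HM.1].
- move=> a; case: L => // _ M HM w; rewrite sat_imp /= => H v Hv u Hu; apply: H;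
  [exact: (HM _ _ _ Hv Hu) | exact: (HM.2 _ _ _ Hv Hu) | exact: (HM.2.2 _ _ _ Hv Hu)].
- move=> a; case: L => // _ M HM w; rewrite sat_imp /= => H v Hv H'; apply: H => u Hu;
  apply: H'.
  + exact: HM Hv Hu.
  + move: HM => [_ [Hs Ht]]; apply: Ht (Hs _ _ Hv) Hu.
- move=> pi a s1 s2 [_ E1] [_ E2] M _ w; rewrite sat_iff sat_bigAnd /=; split.
  + move=> H x /seq_In_map [D1 [HD1 ->]]; apply/sat_bigAnd => y /seq_In_map [D2 [HD2 ->]] /=.
    by apply: H; [apply/E1|apply/E2].
  + move=> H D1 D2 HD1 HD2.
    have := H _ (proj2 (seq_In_map _ _ _) (ex_intro _ D1 (conj (proj2 (E1 D1) HD1) erefl))).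
    move/sat_bigAnd => H'; apply: (H' (FUpd D1 D2 I0 a)); apply/seq_In_map; exists D2; split=> //; exact/E2.
- by move=> D1 D2 p M _ w; rewrite sat_iff.
- move=> D1 D2 p H1 H2 M _ w; rewrite sat_iff /=; split=> [[|[_ [_ ]]]|]; rewrite ?(negbTE H2) //.
  by move=> H; right.
- by move=> D1 D2 p H M _ w; rewrite sat_iff /=; split=> // _; left.
- move=> D1 D2 p H M _ w; rewrite sat_iff /=; split=> // [[H'|[H' _]]].
  + by case: (ntc_tf H H').
  + by rewrite H in H'.
- move=> D1 D2 p H1 H2 M _ w; rewrite sat_iff /=; split=> [[|[_ [_ ]]]|]; rewrite ?(negbTE H2) //.
  by move=> H; right.
- by move=> D1 D2 p H M _ w; rewrite sat_iff /=; split=> // _; left.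
- move=> D1 D2 p H M _ w; rewrite sat_iff /=; split=> // [[H'|[H' _]]].
  + by case: (ntc_tf H H').
  + by rewrite H in H'.
- by move=> D1 D2 i a M _ w; rewrite sat_iff.
- by move=> D1 D2 i a b M _ w; rewrite sat_iff.
- move=> D1 D2 i a M _ w; rewrite sat_iff /=; split.
  + by move=> H v Hv; split; [|split]; apply: H.
  + by move=> H [v j] /= Hv; case: j; apply H.
- move=> D1 D2 i a b M _ w; rewrite !sat_imp => H1.
  exact (proj1 (@sat_imp (upd_model At M D1 D2) (w,i) a b) H1).
- move=> D1 D2 i a _ IH M HM w /=; apply: IH; exact: frame_upd.
Qed.
End S.
Local Open Scope fset_scope.

Section E.
Context {At : countType}.

Fixpoint patoms (p : pform At) : seq At :=
  match p with
  | PTop => [::]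
  | PAtom a => [:: a]
  | PNeg q => patoms q
  | PAnd q r => patoms q ++ patoms r
  end.

Lemma peval_ext (v v' : At -> bool) p : (forall a, a \in patoms p -> v a = v' a) -> peval v p = peval v' p.
Proof.
elim: p => [|a|q IH|q IHq r IHr] /= H.
- by [].
- by apply: H; rewrite inE.
- by rewrite IH.
- by rewrite IHq ?IHr // => a Ha; apply: H; rewrite mem_cat Ha ?orbT.
Qed.

Lemma lit_other (l l' : lit At) : l' != l -> l'.2 = l.2 -> l' = lneg l.
Proof. case: l => b p; case: l' => b' p' /= Hne E2; subst p'; rewrite /lneg /=; move: Hne; case: b; case: b'; rewrite ?eqxx //. Qed.

Lemma inC_atoms pi (D : ntclause At) l : inC pi D -> l \in (D : clause At) -> l.2 \in patoms pi.
Proof.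
move=> [Hent Hmin] Hl; apply: NNPP => Hn; move/negP: Hn => Hn.
apply: (Hmin ((D : clause At) `\ l)); first exact: fproperD1.
move=> v Hv.
pose v' := fun a => if a == l.2 then ~~ l.1 else v a.
have Hv' : peval v' pi by rewrite -(@peval_ext v) // => a Ha; rewrite /v'; case: eqP => // E; rewrite -E Ha in Hn.
case: (Hent v' Hv') => l' Hl'D Hl'v.
have Hne : l' != l by apply/eqP => E; move: Hl'v; rewrite E /litval /v' eqxx; case: (l.1).
have Hne2 : l'.2 != l.2.
  apply/eqP => E2; move: (ntc_ok D); rewrite /tautological => /hasP; apply.
  exists l => //; by rewrite -(lit_other Hne E2).
exists l'; first by rewrite in_fsetD1 Hne Hl'D.
by move: Hl'v; rewrite /litval /v' (negbTE Hne2).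
Qed.

Lemma ntc_inj (D D' : ntclause At) : ntc D = ntc D' -> D = D'.
Proof. case: D => c h; case: D' => c' h' /= E; subst c'; congr NTC; exact: bool_irrelevance. Qed.

Definition ntc_dec (D D' : ntclause At) : {D = D'} + {D <> D'}.
Proof. case: (ntc D =P ntc D') => E; [left; exact: ntc_inj | right => E'; apply: E; by rewrite E']. Defined.

Definition mk (D : clause At) : option (ntclause At) :=
  match excluded_middle_informative (exists D' : ntclause At, ntc D' = D) with
  | left H => Some (proj1_sig (constructive_indefinite_description _ H))
  | right _ => None end.

Lemma mkK (D : ntclause At) : mk (ntc D) = Some D.
Proof.
rewrite /mk; case: excluded_middle_informative => [H|H]; last by case: H; exists D.
congr Some; apply: ntc_inj; exact: (proj2_sig (constructive_indefinite_description _ H)).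
Qed.

Lemma In_pmap (A B : Type) (f : A -> option B) (s : seq A) x :
  (exists y, List.In y s /\ f y = Some x) -> List.In x (pmap f s).
Proof.
elim: s => [|y s IH] [y' [Hin Hf]] /=; first by case: Hin.
case: Hin => [E|Hin].
- by subst y'; rewrite Hf; left.
- case: (f y) => [z|] /=; [right|]; apply: IH; exists y'; by split.
Qed.

Lemma mem_In (T : eqType) (x : T) (s : seq T) : x \in s -> List.In x s.
Proof. elim: s => [|y s IH] //=; rewrite inE => /orP [/eqP ->|H]; [by left|right; exact: IH]. Qed.

Lemma enum_ex (pi : pform At) : exists s, enumerates At (inC pi) s.
Proof.
pose ps := patoms pi.
pose Lits : clause At := seq_fset tt (map (pair true) ps ++ map (pair false) ps).
pose cand := pmap mk (enum_fset (fpowerset Lits)).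
have Hcand : forall D, inC pi D -> List.In D cand.
  move=> D HD; apply: In_pmap; exists (ntc D); split; last exact: mkK.
  apply: mem_In; change ((D : clause At) \in fpowerset Lits); rewrite fpowersetE.
  apply/fsubsetP => l Hl; rewrite /Lits seq_fsetE mem_cat.
  have := inC_atoms HD Hl; case: l {Hl} => [[] p] /= Hp.
  - by rewrite (map_f (pair true) Hp).
  - by rewrite (map_f (pair false) Hp) orbT.
exists (List.nodup ntc_dec (List.filter (fun D => bdec (inC pi D)) cand)).
split; first exact: List.NoDup_nodup.
move=> D; rewrite List.nodup_In List.filter_In; split; first by case=> _ /bdecP.
by move=> H; split; [apply: Hcand|apply/bdecP].
Qed.

End E.
Local Close Scope fset_scope.

Section Tr.
Context {At : countType}.
Local Notation ectx := (seq (ntclause At * ntclause At * idx)).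
Implicit Types a b : form At.

Fixpoint wrap (ctx : ectx) a : form At :=
  match ctx with [::] => a | (D1, D2, i) :: c => wrap c (FUpd D1 D2 i a) end.

Definition s_enum (pi : pform At) : seq (ntclause At) :=
  proj1_sig (constructive_indefinite_description _ (enum_ex pi)).
Lemma s_enumP pi : enumerates At (inC pi) (s_enum pi).
Proof. exact: (proj2_sig (constructive_indefinite_description _ (enum_ex pi))). Qed.

Definition T3 (f : idx -> form At) : form At := FAnd (f I0) (FAnd (f I1) (f I2)).

Fixpoint Q (ctx : ectx) (k : ectx -> form At) : form At :=
  match ctx with
  | [::] => k [::]
  | (D1, D2, _) :: c => Q c (fun c' => T3 (fun j => k ((D1, D2, j) :: c')))
  end.

Definition lit_tr (D : ntclause At) p (x : form At) : form At :=
  if (false, p) \in (D : clause At) then FTop else if (true, p) \in (D : clause At) then FBot else x.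

Fixpoint atr (ctx : ectx) p : form At :=
  match ctx with
  | [::] => FAtom p
  | (D1, D2, i) :: c =>
    match i with I0 => atr c p | I1 => lit_tr D1 p (atr c p) | I2 => lit_tr D2 p (atr c p) end
  end.

Fixpoint tr a (ctx : ectx) {struct a} : form At :=
  match a with
  | FTop => FTop
  | FAtom p => atr ctx p
  | FNeg b => FNeg (tr b ctx)
  | FAnd b c => FAnd (tr b ctx) (tr c ctx)
  | FBox b => FBox (Q ctx (fun c => tr b c))
  | FDyn pi b => bigAnd (map (fun D1 => bigAnd (map (fun D2 => tr b ((D1, D2, I0) :: ctx))
                   (s_enum (PNeg pi)))) (s_enum pi))
  | FUpd D1 D2 i b => tr b ((D1, D2, i) :: ctx)
  end.

Fixpoint uf a : bool :=
  match a with
  | FTop | FAtom _ => true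
  | FNeg b => uf b
  | FAnd b c => uf b && uf c
  | FBox b => uf b
  | _ => false
  end.

Lemma uf_bigAnd (T : Type) (f : T -> form At) s : (forall x, uf (f x)) -> uf (bigAnd (map f s)).
Proof. by move=> H; elim: s => //= x s ->; rewrite H. Qed.

Lemma uf_Q ctx k : (forall c, uf (k c)) -> uf (Q ctx k).
Proof. elim: ctx k => [|[[D1 D2] i] c IH] k H //=; apply: IH => c'; by rewrite /= !H. Qed.

Lemma uf_atr ctx p : uf (atr ctx p).
Proof. elim: ctx => [|[[D1 D2] i] c IH] //=; case: i => //=; rewrite /lit_tr; case: ifP => _ //; by case: ifP. Qed.

Lemma uf_tr a ctx : uf (tr a ctx).
Proof.
elim: a ctx => [|p|b IH|b IHb c IHc|b IH|pi b IH|D1 D2 i b IH] ctx //=.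
- exact: uf_atr.
- by rewrite IHb IHc.
- by apply: uf_Q.
- by apply: uf_bigAnd => D1; apply: uf_bigAnd.
Qed.

Context {L : logic}.
Local Notation "|- a" := (derivable At L a) (at level 70).

Lemma wrap_imp ctx a b : |- FImp a b -> |- FImp (wrap ctx a) (wrap ctx b).
Proof. elim: ctx a b => [|[[D1 D2] i] c IH] a b H //=; apply: IH; exact: upd_imp. Qed.

Lemma wrap_iff ctx a b : |- FIff a b -> |- FIff (wrap ctx a) (wrap ctx b).
Proof. by move=> h; apply: iffI; apply: wrap_imp; [apply: iff_l h | apply: iff_r h]. Qed.

Lemma wrap_nec ctx a : |- a -> |- wrap ctx a.
Proof. elim: ctx a => [|[[D1 D2] i] c IH] a H //=; apply: IH; exact: d_nec_upd. Qed.

Lemma wrap_neg ctx a : |- FIff (wrap ctx (FNeg a)) (FNeg (wrap ctx a)).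
Proof.
elim: ctx a => [|[[D1 D2] i] c IH] a /=; first exact: iff_refl.
apply: iff_trans (IH _); apply: wrap_iff; exact: d_ax4.
Qed.

Lemma wrap_and ctx a b : |- FIff (wrap ctx (FAnd a b)) (FAnd (wrap ctx a) (wrap ctx b)).
Proof.
elim: ctx a b => [|[[D1 D2] i] c IH] a b /=; first exact: iff_refl.
apply: iff_trans (IH _ _); apply: wrap_iff; exact: d_ax5.
Qed.

Lemma wrap_top ctx : |- FIff (wrap ctx FTop) FTop.
Proof. apply: iff_of; [apply: wrap_nec|]; exact: top. Qed.

Lemma wrap_bot ctx : |- FIff (wrap ctx FBot) FBot.
Proof. apply: iff_trans (wrap_neg _ _) _; apply: neg_iff; exact: wrap_top. Qed.

Lemma wrap_T3 ctx f : |- FIff (wrap ctx (T3 f)) (T3 (fun j => wrap ctx (f j))).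
Proof.
apply: iff_trans (wrap_and _ _ _) _; apply: and_iff; first exact: iff_refl.
exact: wrap_and.
Qed.

Lemma T3_iff f g : (forall j, |- FIff (f j) (g j)) -> |- FIff (T3 f) (T3 g).
Proof. by move=> H; apply: and_iff => //; apply: and_iff. Qed.

Lemma Q_iff ctx k k' : (forall c, |- FIff (k c) (k' c)) -> |- FIff (Q ctx k) (Q ctx k').
Proof.
elim: ctx k k' => [|[[D1 D2] i] c IH] k k' H //=; apply: IH => c'; apply: T3_iff => j; exact: H.
Qed.

Lemma wrap_box ctx a : |- FIff (wrap ctx (FBox a)) (FBox (Q ctx (fun c => wrap c a))).
Proof.
elim: ctx a => [|[[D1 D2] i] c IH] a /=; first exact: iff_refl.
apply: iff_trans; first by apply: wrap_iff; exact: d_ax6.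
apply: iff_trans (IH _) _; apply: box_iff; apply: Q_iff => c'.
exact: (wrap_T3 c' (fun j => FUpd D1 D2 j a)).
Qed.

Lemma bigAnd_map_iff (T : Type) (f g : T -> form At) s :
  (forall x, List.In x s -> |- FIff (f x) (g x)) -> |- FIff (bigAnd (map f s)) (bigAnd (map g s)).
Proof.
elim: s => [|x s IH] H /=; first exact: iff_refl.
apply: and_iff; first by apply: H; left.
by apply: IH => y Hy; apply: H; right.
Qed.

Lemma wrap_bigAnd (T : Type) ctx (f : T -> form At) s :
  |- FIff (wrap ctx (bigAnd (map f s))) (bigAnd (map (fun x => wrap ctx (f x)) s)).
Proof.
elim: s => [|x s IH] /=; first exact: wrap_top.
apply: iff_trans (wrap_and _ _ _) _; apply: and_iff => //; exact: iff_refl.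
Qed.

Lemma wrap_atom ctx p : |- FIff (wrap ctx (FAtom p)) (atr ctx p).
Proof.
elim: ctx => [|[[D1 D2] i] c IH] /=; first exact: iff_refl.
case: i => /=.
- apply: iff_trans IH; apply: wrap_iff; exact: d_ax2.
- rewrite /lit_tr; case: ifP => Hf.
    apply: iff_trans (wrap_top c); apply: wrap_iff; exact: d_ax3_1b.
  case: ifP => Ht.
    apply: iff_trans (wrap_bot c); apply: wrap_iff; exact: d_ax3_1c.
  apply: iff_trans IH; apply: wrap_iff; apply: d_ax3_1a; by rewrite ?Hf ?Ht.
- rewrite /lit_tr; case: ifP => Hf.
    apply: iff_trans (wrap_top c); apply: wrap_iff; exact: d_ax3_2b.
  case: ifP => Ht.
    apply: iff_trans (wrap_bot c); apply: wrap_iff; exact: d_ax3_2c.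
  apply: iff_trans IH; apply: wrap_iff; apply: d_ax3_2a; by rewrite ?Hf ?Ht.
Qed.

Lemma tr_correct a ctx : |- FIff (wrap ctx a) (tr a ctx).
Proof.
elim: a ctx => [|p|b IH|b IHb c IHc|b IH|pi b IH|D1 D2 i b IH] ctx /=.
- exact: wrap_top.
- exact: wrap_atom.
- apply: iff_trans (wrap_neg _ _) _; exact: neg_iff.
- apply: iff_trans (wrap_and _ _ _) _; exact: and_iff.
- apply: iff_trans (wrap_box _ _) _; apply: box_iff; exact: Q_iff.
- apply: iff_trans.
    apply: wrap_iff; exact: (d_ax1 _ _ pi b _ _ (s_enumP pi) (s_enumP (PNeg pi))).
  apply: iff_trans (wrap_bigAnd _ _ _) _; apply: bigAnd_map_iff => D1 _.
  apply: iff_trans (wrap_bigAnd _ _ _) _; apply: bigAnd_map_iff => D2 _.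
  exact: (IH ((D1, D2, I0) :: ctx)).
- exact: (IH ((D1, D2, i) :: ctx)).
Qed.

End Tr.

Section Enc.
Context {At : countType}.

Fixpoint encf (a : form At) : GenTree.tree At :=
  match a with
  | FTop => GenTree.Node 0 [::]
  | FAtom p => GenTree.Leaf p
  | FNeg b => GenTree.Node 1 [:: encf b]
  | FAnd b c => GenTree.Node 2 [:: encf b; encf c]
  | FBox b => GenTree.Node 3 [:: encf b]
  | _ => GenTree.Node 4 [::]
  end.

Fixpoint decf (t : GenTree.tree At) : option (form At) :=
  match t with
  | GenTree.Leaf p => Some (FAtom p)
  | GenTree.Node 0 [::] => Some FTop
  | GenTree.Node 1 [:: t1] => omap (@FNeg At) (decf t1)
  | GenTree.Node 2 [:: t1; t2] =>
      match decf t1, decf t2 with Some x, Some y => Some (FAnd x y) | _, _ => None end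
  | GenTree.Node 3 [:: t1] => omap (@FBox At) (decf t1)
  | _ => None
  end.

Lemma decf_encf a : uf a -> decf (encf a) = Some a.
Proof.
elim: a => [|p|b IH|b IHb c IHc|b IH|pi b IH|D1 D2 i b IH] //= H.
- by rewrite IH.
- by case/andP: H => H1 H2; rewrite IHb ?IHc.
- by rewrite IH.
Qed.

Definition enumf (n : nat) : form At :=
  match choice.unpickle n with Some t => odflt FTop (decf t) | None => FTop end.

Lemma enumf_surj a : uf a -> exists n, enumf n = a.
Proof. move=> H; exists (choice.pickle (encf a)); by rewrite /enumf choice.pickleK decf_encf. Qed.
End Enc.

Section Canon.
Context {At : countType} {L : logic}.
Local Notation "|- a" := (derivable At L a) (at level 70).
Implicit Types a b : form At.
Implicit Types G : form At -> Prop.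

Definition incons G := exists l, (forall x, List.In x l -> G x) /\ |- FNeg (bigAnd l).
Definition consis G := ~ incons G.
Definition mcs G := consis G /\ forall a, uf a -> G a \/ G (FNeg a).

Lemma split_ext G a l : (forall x, List.In x l -> G x \/ x = a) ->
  exists l', (forall x, List.In x l' -> G x) /\ |- FImp (FAnd (bigAnd l') a) (bigAnd l).
Proof.
elim: l => [|x l IH] H /=.
  exists [::]; split=> // ; pc (@nil (pform nat)) (pImp (PAnd PTop (V 0)) PTop) [:: a].
case: IH => [y Hy|l' [Hl' Hd]]; first by apply: H; right.
case: (H x (or_introl erefl)) => [Gx|->].
- exists (x :: l'); split=> [y [<-|Hy]|]; [by []|exact: Hl'|].
  pc [:: pImp (PAnd (V 0) (V 1)) (V 2)] (pImp (PAnd (PAnd (V 3) (V 0)) (V 1)) (PAnd (V 3) (V 2)))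
     [:: bigAnd l'; a; bigAnd l; x].
- exists l'; split=> //.
  pc [:: pImp (PAnd (V 0) (V 1)) (V 2)] (pImp (PAnd (V 0) (V 1)) (PAnd (V 1) (V 2)))
     [:: bigAnd l'; a; bigAnd l].
Qed.

Lemma bigAnd_cat l1 l2 : |- FImp (bigAnd (l1 ++ l2)) (FAnd (bigAnd l1) (bigAnd l2)).
Proof.
elim: l1 => [|x l1 IH] /=.
  pc (@nil (pform nat)) (pImp (V 0) (PAnd PTop (V 0))) [:: bigAnd l2].
pc [:: pImp (V 2) (PAnd (V 0) (V 1))] (pImp (PAnd (V 3) (V 2)) (PAnd (PAnd (V 3) (V 0)) (V 1)))
   [:: bigAnd l1; bigAnd l2; bigAnd (l1 ++ l2); x].
Qed.

Lemma cons_ext G a : consis G -> consis (fun x => G x \/ x = a) \/ consis (fun x => G x \/ x = FNeg a).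
Proof.
move=> HG; apply: NNPP => Hn; apply: HG.
have [H1 H2] : incons (fun x => G x \/ x = a) /\ incons (fun x => G x \/ x = FNeg a).
  by split; apply: NNPP => H; apply: Hn; [left|right].
case: H1 => l1 [Hl1 Hd1]; case: H2 => l2 [Hl2 Hd2].
case: (split_ext Hl1) => l1' [Hl1' He1]; case: (split_ext Hl2) => l2' [Hl2' He2].
exists (l1' ++ l2'); split.
  move=> x Hx; case: (List.in_app_or _ _ _ Hx) => Hy; [exact: Hl1'|exact: Hl2'].
have Hc := bigAnd_cat l1' l2'.
pc [:: pImp (PAnd (V 0) (V 1)) (V 2); PNeg (V 2); pImp (PAnd (V 3) (PNeg (V 1))) (V 4); PNeg (V 4);
       pImp (V 5) (PAnd (V 0) (V 3))] (PNeg (V 5))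
   [:: bigAnd l1'; a; bigAnd l1; bigAnd l2'; bigAnd l2; bigAnd (l1' ++ l2')].
Qed.

Fixpoint chain G0 (n : nat) : form At -> Prop :=
  match n with
  | 0 => G0
  | S n => let G := chain G0 n in let a := enumf n in
      if bdec (consis (fun x => G x \/ x = a)) then (fun x => G x \/ x = a)
      else (fun x => G x \/ x = FNeg a)
  end.

Lemma chain_step G0 n x : chain G0 n x -> chain G0 n.+1 x.
Proof. by move=> H /=; case: bdec; left. Qed.

Lemma chain_mono G0 m n x : m <= n -> chain G0 m x -> chain G0 n x.
Proof.
move=> /subnKC <-; elim: (n - m) => [|k IH] H; first by rewrite addn0.
by rewrite addnS; apply: chain_step; apply: IH.
Qed.

Lemma chain_cons G0 n : consis G0 -> consis (chain G0 n).
Proof.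
move=> H0; elim: n => [|n IH] //=.
case E: bdec; first by move/bdecP: E.
case: (cons_ext (enumf n) IH) => // H; move: E; by rewrite (proj2 (bdecP _) H).
Qed.

Lemma lindenbaum G0 : consis G0 -> exists G, mcs G /\ (forall x, G0 x -> G x).
Proof.
move=> H0; exists (fun x => exists n, chain G0 n x); split; last by move=> x Hx; exists 0.
split.
- move=> [l [Hl Hd]].
  have [n Hn] : exists n, forall x, List.In x l -> chain G0 n x.
    elim: l Hl {Hd} => [|y l IH] Hl; first by exists 0.
    case: IH => [x Hx|n Hn]; first by apply: Hl; right.
    case: (Hl y (or_introl erefl)) => m Hm.
    exists (maxn m n) => x [<-|Hx]; [exact: (chain_mono (leq_maxl m n) Hm)|exact: (chain_mono (leq_maxr m n) (Hn x Hx))].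
  by apply: (@chain_cons G0 n H0); exists l.
- move=> a Ha; case: (enumf_surj Ha) => n En.
  have : chain G0 n.+1 a \/ chain G0 n.+1 (FNeg a).
    rewrite /= En; case: bdec; [left|right]; by right.
  by case=> H; [left|right]; exists n.+1.
Qed.

Lemma mcs_closed G l b : mcs G -> (forall x, List.In x l -> G x) -> |- FImp (bigAnd l) b -> uf b -> G b.
Proof.
move=> [HC HM] Hl Hd Hb; case: (HM b Hb) => // Hn; exfalso; apply: HC.
exists (FNeg b :: l); split; first by move=> x [<-|Hx]; [|apply: Hl].
pc [:: pImp (V 0) (V 1)] (PNeg (PAnd (PNeg (V 1)) (V 0))) [:: bigAnd l; b].
Qed.

Lemma mcs_not G a : mcs G -> G a -> G (FNeg a) -> False.
Proof.
move=> [HC _] H1 H2; apply: HC; exists [:: a; FNeg a]; split; first by move=> x [<-|[<-|[]]].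
pc (@nil (pform nat)) (PNeg (PAnd (V 0) (PAnd (PNeg (V 0)) PTop))) [:: a].
Qed.

Lemma mcs_neg G a : mcs G -> uf a -> G (FNeg a) <-> ~ G a.
Proof.
move=> HG Ha; split=> [H1 H2|H]; first exact: mcs_not HG H2 H1.
by case: (HG.2 a Ha).
Qed.

Lemma mcs_and G a b : mcs G -> uf a -> uf b -> G (FAnd a b) <-> G a /\ G b.
Proof.
move=> HG Ha Hb; split=> [H|[H1 H2]].
- split; apply: (@mcs_closed G [:: FAnd a b]) => //; try by move=> x [<-|[]].
  + pc (@nil (pform nat)) (pImp (PAnd (PAnd (V 0) (V 1)) PTop) (V 0)) [:: a; b].
  + pc (@nil (pform nat)) (pImp (PAnd (PAnd (V 0) (V 1)) PTop) (V 1)) [:: a; b].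
- apply: (@mcs_closed G [:: a; b]) => //=; first by move=> x [<-|[<-|[]]].
  + pc (@nil (pform nat)) (pImp (PAnd (V 0) (PAnd (V 1) PTop)) (PAnd (V 0) (V 1))) [:: a; b].
  + by rewrite Ha Hb.
Qed.

End Canon.

Section Compl.
Context {At : countType} {L : logic}.
Local Notation "|- a" := (derivable At L a) (at level 70).
Implicit Types a b : form At.

Lemma box_and a b : |- FImp (FAnd (FBox a) (FBox b)) (FBox (FAnd a b)).
Proof.
have H1 : |- FImp a (FImp b (FAnd a b)) by pc (@nil (pform nat)) (pImp (V 0) (pImp (V 1) (PAnd (V 0) (V 1)))) [:: a; b].
have H2 := box_imp H1.
have H3 := d_K At L b (FAnd a b).
pc [:: pImp (V 0) (V 2); pImp (V 2) (pImp (V 1) (V 3))] (pImp (PAnd (V 0) (V 1)) (V 3))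
   [:: FBox a; FBox b; FBox (FImp b (FAnd a b)); FBox (FAnd a b)].
Qed.

Lemma box_bigAnd l : |- FImp (bigAnd (map (@FBox At) l)) (FBox (bigAnd l)).
Proof.
elim: l => [|x l IH] /=.
  have H : |- FBox (@FTop At) by apply: d_Nec; exact: top.
  pc [:: V 0] (pImp PTop (V 0)) [:: FBox (@FTop At)].
have H := box_and x (bigAnd l).
pc [:: pImp (V 1) (V 2); pImp (PAnd (V 0) (V 2)) (V 3)] (pImp (PAnd (V 0) (V 1)) (V 3))
   [:: FBox x; bigAnd (map (@FBox At) l); FBox (bigAnd l); FBox (FAnd x (bigAnd l))].
Qed.

Definition cworld := {G : form At -> Prop | @mcs At L G}.
Definition crel (G D : cworld) : Prop := forall b, uf b -> sval G (FBox b) -> sval D b.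
Definition cmodel : model At := Model cworld crel (fun p (G : cworld) => sval G (FAtom p)).

Lemma truth a : uf a -> forall G : cworld, sat At cmodel G a <-> sval G a.
Proof.
elim: a => [|p|b IH|b IHb c IHc|b IH|pi b IH|D1 D2 i b IH] /= Ha G; try done.
- split=> // _; apply: (@mcs_closed _ _ (sval G) [::]) => //; first exact: (svalP G).
  pc (@nil (pform nat)) (pImp PTop PTop) [:: @FTop At].
- rewrite (mcs_neg (svalP G) Ha); by rewrite IH.
- case/andP: Ha => Hb Hc; rewrite (mcs_and (svalP G) Hb Hc); by rewrite IHb ?IHc.

- split=> [H|H D HD]; last by apply/IH => //; apply: HD.
  apply: NNPP => Hn.
  pose D0 := fun x => (uf x /\ sval G (FBox x)) \/ x = FNeg b.
  have HD0 : consis (L:=L) D0.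
    move=> [l [Hl Hd]].
    case: (@split_ext At L (fun x => uf x /\ sval G (FBox x)) (FNeg b) l Hl) => l' [Hl' He].
    apply: Hn; apply: (@mcs_closed _ _ (sval G) (map (@FBox At) l')) => //; first exact: (svalP G).
      by move=> x /seq_In_map [y [Hy ->]]; case: (Hl' y Hy).
    have H1 : |- FImp (bigAnd l') b.
      pc [:: pImp (PAnd (V 0) (PNeg (V 1))) (V 2); PNeg (V 2)] (pImp (V 0) (V 1)) [:: bigAnd l'; b; bigAnd l].
    exact: imp_trans (box_bigAnd l') (box_imp H1).
  case: (lindenbaum HD0) => D [HD HsD].
  have : sat At cmodel (exist _ D HD : cworld) b.
    apply: H => x Hx HG; apply: HsD; by left.
  move/IH => /= /(_ Ha) Hb.
  by apply: (mcs_not HD Hb); apply: HsD; right.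
Qed.

Lemma crel_refl : has_T L -> reflexive_rel cworld crel.
Proof.
move=> HT G b Hb HG; apply: (@mcs_closed _ _ (sval G) [:: FBox b]) => //; first exact: (svalP G).
  by move=> x [<-|[]].
have H := d_T At L b HT.
pc [:: pImp (V 0) (V 1)] (pImp (PAnd (V 0) PTop) (V 1)) [:: FBox b; b].
Qed.

Lemma crel_trans : has_4 L -> transitive_rel cworld crel.
Proof.
move=> H4 G D E HGD HDE b Hb HG; apply: HDE => //; apply: HGD => //.
apply: (@mcs_closed _ _ (sval G) [:: FBox b]) => //; first exact: (svalP G).
  by move=> x [<-|[]].
have H := d_4 At L b H4.
pc [:: pImp (V 0) (V 1)] (pImp (PAnd (V 0) PTop) (V 1)) [:: FBox b; FBox (FBox b)].
Qed.

Lemma crel_eucl : has_5 L -> euclidean_rel cworld crel.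
Proof.
move=> H5 G D E HGD HGE b Hb HD.
case: ((svalP G).2 (FBox b) Hb) => HG; first exact: HGE.
exfalso; apply: (mcs_not (svalP D) HD); apply: HGD => //.
apply: (@mcs_closed _ _ (sval G) [:: FNeg (FBox b)]) => //; first exact: (svalP G).
  by move=> x [<-|[]].
have H := d_5 At L b H5.
pc [:: pImp (V 0) (V 1)] (pImp (PAnd (V 0) PTop) (V 1)) [:: FNeg (FBox b); FBox (FNeg (FBox b))].
Qed.

Lemma cframe : frame_cond L cworld crel.
Proof.
case E: L => /=.
- by [].
- apply: crel_refl; by rewrite E.
- apply: crel_trans; by rewrite E.
- apply: crel_eucl; by rewrite E.
- by split; [apply: crel_refl|apply: crel_trans]; rewrite E.
- have Hr : reflexive_rel cworld crel by apply: crel_refl; rewrite E.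
  have He : euclidean_rel cworld crel by apply: crel_eucl; rewrite E.
  have Hs : symmetric_rel cworld crel by move=> u v Huv; apply: He Huv (Hr u).
  split=> //; split=> // u v w Huv Hvw; apply: He (Hs _ _ Huv) Hvw.
Qed.

Lemma completeness a : uf a -> valid_in At L a -> |- a.
Proof.
move=> Ha Hv; apply: NNPP => Hn.
have H0 : consis (L:=L) (fun x => x = FNeg a).
  move=> [l [Hl Hd]].
  case: (@split_ext At L (fun _ => False) (FNeg a) l) => [x Hx|l' [Hl' He]]; first by right; apply: Hl.
  case: l' Hl' He => [|y l'] Hl' He; last by case: (Hl' y (or_introl erefl)).
  apply: Hn.
  pc [:: pImp (PAnd PTop (PNeg (V 0))) (V 1); PNeg (V 1)] (V 0) [:: a; bigAnd l].
case: (lindenbaum H0) => G [HG HsG].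
have := Hv cmodel (inhabits (exist _ G HG)) cframe (exist _ G HG).
move/(truth Ha) => /= Ga.
by apply: (mcs_not HG Ga); apply: HsG.
Qed.
End Compl.

Theorem theorem2 (At : countType) (HAt : inhabited At) (L : logic) (phi : form At) :
  valid_in At L phi <-> derivable At L phi.
Proof.
split; last by move=> H M _ HM w; exact: (sound H).
move=> Hv.
have Htr := @tr_correct At L phi [::].
apply: (iff_mpr Htr); apply: completeness; first exact: uf_tr.
move=> M Hi HM w; have := sound Htr HM w; rewrite sat_iff => <-; exact: Hv.
Qed.
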